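(* For all integers $q\ge1$ and $n\ge1$, the number of nonattacking placements of $q$ unlabelled semibishops on the $n\times n$ triangular board is $$u^{\mathcal T}_{\mathsf Q^{01}}(q;n)=(-1)^q s(n+1,n+1-q).$$
   Context: The $n\times n$ triangular board is the set $\{(x,y)\in\mathbb Z^2:1\le x\le y-1\le n\}$ (the integral points in the interior of the $(n+2)$-fold dilation of the triangle $\{0\le x\le y\le1\}$). The semibishop has the single basic move $(1,1)$: two pieces at positions $z,z'$ attack each other if $z'-z$ is an integer multiple of $(1,1)$ (including $z=z'$). $u^{\mathcal T}_{\mathsf Q^{01}}(q;n)$ counts the sets of $q$ positions on the triangular board no two of which attack each other. $s(a,b)$ is the signed Stirling number of the first kind. *)

(* Defs.v *)
From mathcomp Require Import all_boot all_order all_algebra ssrint.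
Set Implicit Arguments. Unset Strict Implicit. Unset Printing Implicit Defensive.
Import GRing.Theory Num.Theory.

Fixpoint stirling1s (a b : nat) : int :=
  match a, b with
  | 0, 0 => 1
  | 0, _.+1 => 0
  | _.+1, 0 => 0
  | a'.+1, b'.+1 => (stirling1s a' b' - a'%:Z * stirling1s a' b'.+1)%R
  end.

(* Positions are pairs of integers; every board point has coordinates in
   {0,...,n+1}, so we use the finite type 'I_(n+2) * 'I_(n+2). *)
Definition pos (n : nat) := ('I_(n.+2) * 'I_(n.+2))%type.

Definition tri_board (n : nat) : {set pos n} :=
  [set z : pos n | [&& 1 <= z.1, z.1 <= z.2 - 1 & z.2 - 1 <= n]%N].

Definition semibishop_attack (n : nat) (z z' : pos n) : bool :=
  ((z'.1)%:Z - (z.1)%:Z == (z'.2)%:Z - (z.2)%:Z)%R.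

Definition u_tri_semibishop (q n : nat) : nat :=
  #|[set S : {set pos n} | [&& S \subset tri_board n, #|S| == q &
      [forall z in S, forall z' in S, (z != z') ==> ~~ semibishop_attack z z']]]|.

(* Main.v *)
Require Import Defs.
From mathcomp Require Import all_boot all_order all_algebra ssrint.
From mathcomp Require Import zify ring.
Import GRing.Theory Num.Theory.
Set Implicit Arguments. Unset Strict Implicit.

Section Gen.
Variables (T : finType) (K : eqType) (g : T -> K).

Definition okS (S : {set T}) :=
  [forall z in S, forall z' in S, (z != z') ==> (g z != g z')].
Definition Fam (B : {set T}) q :=
  [set S : {set T} | [&& S \subset B, #|S| == q & okS S]].

Lemma okS_sub (S S' : {set T}) : S \subset S' -> okS S' -> okS S.
Proof.
rewrite /okS => sS /forallP H; apply/forallP => z; apply/implyP => zS.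
apply/forallP => z'; apply/implyP => z'S.
move: (H z); rewrite (subsetP sS _ zS) /= => /forallP/(_ z').
by rewrite (subsetP sS _ z'S).
Qed.

Lemma okSP (S : {set T}) : okS S -> forall z z', z \in S -> z' \in S -> z != z' -> g z != g z'.
Proof.
rewrite /okS => /forallP H z z' zS z'S.
move: (H z); rewrite zS /= => /forallP/(_ z'); rewrite z'S /=.
by move/implyP.
Qed.

Lemma Fam0 (B : {set T}) : Fam B 0 = [set set0].
Proof.
apply/setP => S; rewrite !inE cards_eq0.
case: eqP => [->|]; rewrite ?andbF ?andbT //= sub0set /=.
by apply/forallP => z; rewrite inE.
Qed.

Lemma Fam_set0 q : Fam set0 q.+1 = set0.
Proof.
apply/setP => S; rewrite !inE subset0.
by case: eqP => // ->; rewrite cards0.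
Qed.

Lemma Fam_rec (A B' : {set T}) q :
  (forall a, a \in A -> a \notin B') ->
  {in A &, forall a a', g a = g a'} ->
  {in A & B', forall a z, g a != g z} ->
  #|Fam (A :|: B') q.+1| = #|Fam B' q.+1| + #|A| * #|Fam B' q|.
Proof.
move=> hAB hA hAB'.
pose f := fun p : T * {set T} => p.1 |: p.2.
have notin : forall a S, a \in A -> S \in Fam B' q -> a \notin S.
  move=> a S aA; rewrite inE => /and3P [sS _ _].
  by apply/negP => /(subsetP sS); apply/negP; apply: hAB.
have inj : {in setX A (Fam B' q) &, injective f}.
  move=> [a S] [a' S'] /setXP [/= Ha HS] /setXP [/= Ha' HS'] E; rewrite /f /= in E.
  have eaa : a = a'.
    have : a \in a' |: S' by rewrite -E setU11.
    rewrite in_setU1 => /orP [/eqP //|aS'].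
    by move: (notin _ _ Ha HS'); rewrite aS'.
  subst a'.
  by rewrite -(setU1K (notin _ _ Ha HS)) E setU1K // notin.
have cardG : #|[set f p | p in setX A (Fam B' q)]| = #|A| * #|Fam B' q|.
  by rewrite card_in_imset // cardsX.
have split : Fam (A :|: B') q.+1 = Fam B' q.+1 :|: [set f p | p in setX A (Fam B' q)].
  apply/setP => S; apply/idP/idP.
  - rewrite inE => /and3P [sS cS oS].
    case: (set_0Vmem (S :&: A)) => [SA0 | [a]].
    + rewrite in_setU; apply/orP; left; rewrite inE; apply/and3P; split => //.
      apply/subsetP => z zS.
      move: (subsetP sS _ zS); rewrite in_setU => /orP [zA|//].
      have : z \in S :&: A by rewrite inE zS zA.
      by rewrite SA0 inE.
    + rewrite inE => /andP [aS aA].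
      rewrite in_setU; apply/orP; right; apply/imsetP; exists (a, S :\ a).
        rewrite inE /= aA /= inE; apply/and3P; split.
        * apply/subsetP => z; rewrite !inE => /andP [za zS].
          move: (subsetP sS _ zS); rewrite in_setU => /orP [zA|//].
          have := okSP oS aS zS; rewrite eq_sym za => /(_ isT).
          by rewrite (hA _ _ aA zA) eqxx.
        * by move: cS; rewrite (cardsD1 a) aS.
        * by apply: okS_sub oS; apply: subD1set.
      by rewrite /f /= setD1K.
  - rewrite in_setU => /orP [|/imsetP [[a S'] /setXP [/= aA HS'] ->]].
      rewrite !inE => /and3P [sS -> ->]; rewrite !andbT.
      by apply/subsetP => z /(subsetP sS) zB; rewrite in_setU zB orbT.
    have nS := notin _ _ aA HS'.
    move: HS'; rewrite !inE => /and3P [sS cS oS]; apply/and3P; split.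
    + rewrite /f /= subUset sub1set in_setU aA /=.
      by apply: (subset_trans sS); apply: subsetUr.
    + by rewrite /f /= cardsU1 nS (eqP cS).
    + apply/forallP => z; apply/implyP; rewrite /f /= in_setU1 => Hz.
      apply/forallP => z'; apply/implyP; rewrite in_setU1 => Hz'.
      case/orP: Hz => [/eqP ->|zS]; case/orP: Hz' => [/eqP ->|z'S]; apply/implyP => zz'.
      * by rewrite eqxx in zz'.
      * by apply: hAB' => //; apply: (subsetP sS).
      * by rewrite eq_sym; apply: hAB' => //; apply: (subsetP sS).
      * exact: okSP oS z z' zS z'S zz'.
have disj : Fam B' q.+1 :&: [set f p | p in setX A (Fam B' q)] = set0.
  apply/setP => S; rewrite !inE; apply/negP => /andP [HS /imsetP [[a S'] /setXP [/= aA _] E]].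
  move: HS => /and3P [sS _ _].
  have : a \in S by rewrite E /f /= setU11.
  by move/(subsetP sS); apply/negP; apply: hAB.
by rewrite split cardsU disj cards0 subn0 cardG.
Qed.
End Gen.

Lemma stir_above a b : (a < b)%N -> stirling1s a b = 0%R.
Proof.
elim: a b => [|a IH] [|b] //= hab.
by rewrite !IH // ?mulr0 ?subr0 // ltnW.
Qed.

Lemma stir_diag a : stirling1s a a = 1%R.
Proof. by elim: a => //= a ->; rewrite stir_above // mulr0 subr0. Qed.

Lemma stir_S a b : stirling1s a.+1 b.+1 = (stirling1s a b - a%:Z * stirling1s a b.+1)%R.
Proof. by []. Qed.

Definition F (m q : nat) : int := ((-1) ^+ q * stirling1s m.+1 (m.+1 - q))%R.

Lemma F_rec m q : F m.+1 q.+1 = (F m q.+1 + (m.+1)%:Z * F m q)%R.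
Proof.
rewrite /F.
case: (leqP q m) => hqm.
  have E1 : (m.+2 - q.+1 = (m - q).+1)%N by rewrite subSS subSn.
  have E2 : (m.+1 - q.+1 = (m - q))%N by rewrite subSS.
  have E3 : (m.+1 - q = (m - q).+1)%N by rewrite subSn.
  rewrite E1 E2 E3 stir_S exprS.
  set a := stirling1s _ _; set b := stirling1s _ _.
  ring.
have -> : (m.+1 - q = 0)%N by apply/eqP; rewrite subn_eq0.
have -> : (m.+2 - q.+1 = 0)%N by apply/eqP; rewrite subn_eq0.
by rewrite subSS /= (_ : (m - q = 0)%N) ?mulr0 ?addr0 //; apply/eqP; rewrite subn_eq0 ltnW.
Qed.

Section Board.
Variable n : nat.

Definition gk (z : pos n) : int := ((z.2)%:Z - (z.1)%:Z)%R.
Definition sz (z : pos n) : nat := n.+1 - (z.2 - z.1).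
Definition Bm m := [set z in tri_board n | sz z <= m].
Definition Am m := [set z in tri_board n | sz z == m.+1].

Lemma boardP (z : pos n) : [&& (1 <= z.1)%N, (z.1 <= z.2 - 1)%N & (z.2 - 1 <= n)%N] ->
  [/\ 1 <= z.1, z.1 < z.2 & z.2 <= n.+1]%N.
Proof.
move=> /and3P [h1 h2 h3]; split => //; lia.
Qed.

Lemma Bm_S m : Bm m.+1 = Am m :|: Bm m.
Proof.
apply/setP => z; rewrite !inE -andb_orr; congr (_ && _).
by rewrite leq_eqVlt ltnS.
Qed.

Lemma Bm0 : Bm 0 = set0.
Proof.
apply/setP => z; rewrite !inE; apply/negP => /andP [/boardP [h1 h2 h3]].
rewrite /sz; lia.
Qed.

Lemma Bmn : Bm n = tri_board n.
Proof.
apply/setP => z; rewrite !inE; apply/andb_idr => /boardP [h1 h2 h3].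
rewrite /sz; lia.
Qed.

Lemma cardA m : (m < n)%N -> #|Am m| = m.+1.
Proof.
move=> hm.
pose f := fun i : 'I_m.+1 => ((inord i.+1 : 'I_n.+2), (inord (i.+1 + (n - m)) : 'I_n.+2)) : pos n.
have inj : injective f.
  move=> i j /pair_equal_spec [E _].
  have : (nat_of_ord (inord i.+1 : 'I_n.+2)) = (nat_of_ord (inord j.+1 : 'I_n.+2)) by rewrite E.
  have hi := ltn_ord i; have hj := ltn_ord j.
  rewrite !inordK; try lia.
  by move=> [] /val_inj.
have -> : Am m = [set f i | i in 'I_m.+1].
  apply/setP => [[x y]]; apply/idP/imsetP.
  - rewrite !inE => /andP [/boardP [h1 h2 h3] /eqP hs].
    rewrite /sz /= in hs h1 h2 h3.
    have hx := ltn_ord x; have hy := ltn_ord y.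
    have hz1 : (x - 1 < m.+1)%N by lia.
    exists (Ordinal hz1) => //.
    rewrite /f; congr (_, _); apply/val_inj; rewrite /= inordK; lia.
  - move=> [i _ ->]; have hi := ltn_ord i.
    rewrite !inE /sz /f /= !inordK; lia.
by rewrite card_imset // card_ord.
Qed.

Lemma main m : (m <= n)%N -> forall q, Posz #|Fam gk (Bm m) q| = F m q.
Proof.
elim: m => [|m IH] hm q.
  rewrite Bm0; case: q => [|q].
    by rewrite Fam0 cards1.
  by rewrite Fam_set0 cards0 /F subSS sub0n /= mulr0.
case: q => [|q].
  by rewrite Fam0 cards1 /F subn0 stir_diag mulr1.
rewrite Bm_S Fam_rec.
- by rewrite cardA // PoszD PoszM !IH ?(ltnW hm) // F_rec.
- by move=> a; rewrite !inE => /andP [_ /eqP ->]; rewrite ltnn andbF.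
- move=> a a'; rewrite !inE => /andP [/boardP [h1 h2 h3] /eqP hs] /andP [/boardP [h1' h2' h3'] /eqP hs'].
  rewrite /gk; rewrite /sz in hs hs'; lia.
- move=> a a'; rewrite !inE => /andP [/boardP [h1 h2 h3] /eqP hs] /andP [/boardP [h1' h2' h3'] hs'].
  rewrite /gk; rewrite /sz in hs hs'; apply/eqP; lia.
Qed.

End Board.

Theorem proposition7p4 (q n : nat) (hq : (1 <= q)%N) (hn : (1 <= n)%N) :
  ((u_tri_semibishop q n)%:Z = (-1) ^+ q * stirling1s n.+1 (n.+1 - q))%R.
Proof.
have -> : u_tri_semibishop q n = #|Fam (@gk n) (tri_board n) q|.
  rewrite /u_tri_semibishop; apply: eq_card => S; rewrite !inE.
  congr (_ && (_ && _)); apply: eq_forallb => z; congr (_ ==> _).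
  apply: eq_forallb => z'; congr (_ ==> _); congr (_ ==> _).
  rewrite /semibishop_attack /gk; congr (~~ _).
  by apply/eqP/eqP; lia.
by rewrite -(Bmn n) main.
Qed.
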